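(* Let $(P,\mathit{dist})$ be a finite metric space of doubling dimension $d$, let $\delta$ be the closest-pair distance of $P$, let $S\subseteq P$ with $n=|S|\ge 2$, and let $\delta_0$ be the output of Algorithm $\mathrm{ClosestPair}(S,n,d)$ (for any outcome of its random choices). Then (1) $\delta_0\ge\delta$, and (2) if $\delta(S)=\delta$, then $\delta_0=\delta$.
   Context: For $X\subseteq P$, $p\in P$ and reals $R'\ge R\ge 0$: $\mathit{ball}_X(p,R)=\{x\in X:\mathit{dist}(p,x)\le R\}$ and $\mathit{annulus}_X(p,R,R')=\{x\in X: R<\mathit{dist}(p,x)\le R'\}$. For $X\subseteq P$, $\delta(X)=\infty$ if $|X|\le1$ and $\delta(X)=\min\{\mathit{dist}(x,y):x,y\in X,x\ne y\}$ otherwise; $\delta=\delta(P)$. The doubling dimension of $(P,\mathit{dist})$ is $\log_2\lambda$, where $\lambda$ is the smallest integer such that for every $p\in P$ and real $R>0$, $\mathit{ball}_P(p,R)$ is covered by at most $\lambda$ balls $\mathit{ball}_P(q,R/2)$ with $q\in P$; throughout, $d$ denotes the doubling dimension of the whole space $P$. Algorithm $\mathrm{SepAnn}(S,n,d,\mu,c)$: repeat: choose $p$ uniformly at random from $S$; let $R_p=\min\{r>0:|\mathit{ball}_S(p,r)|\ge n/c\}$; until $|\mathit{ball}_S(p,\mu R_p)|\le n/2$; return $p$ and $R'=R_p$. Algorithm $\mathrm{SparseSepAnn}(S,n,d,t)$: set $c=2(4e)^d$; let $(p,R')$ be the output of $\mathrm{SepAnn}(S,n,d,e,c)$; let $R_i=(1+1/t)^iR'$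 ($0\le i\le t$) and $A_i=\mathit{annulus}_S(p,R_{i-1},R_i)$ ($1\le i\le t$); repeat: choose $i$ uniformly at random from $\{1,\dots,t\}$; until $|A_i|\le n/t$; return $p$ and $R=R_{i-1}$. Algorithm $\mathrm{ClosestPair}(S,n,d)$ (for $S\subseteq P$, $n=|S|\ge2$): if $n<2(16e)^d$, compute $\delta_0=\delta(S)$ by brute force. Otherwise: set $t=\lfloor \frac{1}{16e}(n/2)^{1/d}\rfloor$; let $(p,R)$ be the output of $\mathrm{SparseSepAnn}(S,n,d,t)$; let $S_1=\mathit{ball}_S(p,R)$, $S_2=\mathit{annulus}_S(p,R,(1+1/t)R)$, $S_3=S\setminus(S_1\cup S_2)$; compute $\delta'=\mathrm{ClosestPair}(S_1\cup S_2,|S_1\cup S_2|,d)$ and $\delta''=\mathrm{ClosestPair}(S_2\cup S_3,|S_2\cup S_3|,d)$; set $\delta_0=\min(\delta',\delta'')$. Return $\delta_0$. *)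

(* Defs.v *)
From Stdlib Require Import Reals.
From Coquelicot Require Import Rbar.
From mathcomp Require Import all_boot.

Set Implicit Arguments.
Unset Strict Implicit.
Unset Printing Implicit Defensive.

Local Open Scope R_scope.

Section FiniteMetric.
Variable T : finType.          (* the finite point set P is the whole of T *)
Variable dist : T -> T -> R.

Definition is_metric : Prop :=
  (forall x y, dist x y = 0 <-> x = y) /\
  (forall x y, dist x y = dist y x) /\
  (forall x y z, (dist x z <= dist x y + dist y z)).

Definition Rleb (x y : R) : bool := if Rle_dec x y then true else false.
Definition Rltb (x y : R) : bool := if Rlt_dec x y then true else false.

Definition ball (X : {set T}) (p : T) (r : R) : {set T} :=
  [set x in X | Rleb (dist p x) r].
Definition annulus (X : {set T}) (p : T) (r r' : R) : {set T} :=
  [set x in X | Rltb r (dist p x) && Rleb (dist p x) r'].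

Definition delta (X : {set T}) : Rbar :=
  foldr (fun xy acc => Rbar_min (Rbar.Finite (dist xy.1 xy.2)) acc) p_infty
    [seq xy <- [seq (x, y) | x <- enum X, y <- enum X] | xy.1 != xy.2].

Definition doubling_cover (lam : nat) : Prop :=
  forall (p : T) (r : R), (0 < r) ->
    exists Q : {set T}, (#|Q| <= lam)%N /\
      ball setT p r \subset \bigcup_(q in Q) ball setT q (r / 2).

Definition doubling_constant (lam : nat) : Prop :=
  doubling_cover lam /\ forall lam', doubling_cover lam' -> (lam <= lam')%N.

Definition doubling_dimension (d : R) : Prop :=
  exists lam, doubling_constant lam /\ d = (ln (INR lam) / ln 2).

Definition is_min_radius (S : {set T}) (p : T) (k : R) (r : R) : Prop :=
  (0 < r) /\ (k <= INR #|ball S p r|) /\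
  forall r', (0 < r') -> (k <= INR #|ball S p r'|) -> (r <= r').

(* possible outputs (p, R') of SepAnn(S,n,d,mu,c), over all outcomes of the
   random choices (a repeat-until loop returns exactly an element satisfying
   the exit test) *)
Definition SepAnn_out (S : {set T}) (n : nat) (mu c : R) (p : T) (R' : R) : Prop :=
  p \in S /\ is_min_radius S p (INR n / c) R' /\
  (INR #|ball S p (mu * R')| <= INR n / 2).

Definition SparseSepAnn_out (d : R) (S : {set T}) (n t : nat) (p : T) (R0 : R) : Prop :=
  let c := (2 * Rpower (4 * exp 1) d) in
  exists R', SepAnn_out S n (exp 1) c p R' /\
  let Ri := fun i : nat => ((1 + / INR t) ^ i * R') in
  exists i : nat, (1 <= i <= t)%N /\
    (INR #|annulus S p (Ri i.-1) (Ri i)| <= INR n / INR t) /\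
    R0 = Ri i.-1.

(* ClosestPair_out d S delta0 : delta0 is a possible output of ClosestPair(S,|S|,d)
   (over all outcomes of the random choices, for terminating runs) *)
Inductive ClosestPair_out (d : R) : {set T} -> Rbar -> Prop :=
| CP_brute (S : {set T}) :
    (INR #|S| < 2 * Rpower (16 * exp 1) d) ->
    ClosestPair_out d S (delta S)
| CP_rec (S : {set T}) (t : nat) (p : T) (R0 : R) (d1 d2 : Rbar) :
    ~ (INR #|S| < 2 * Rpower (16 * exp 1) d) ->
    (INR t <= / (16 * exp 1) * Rpower (INR #|S| / 2) (/ d) < INR t + 1) ->
    SparseSepAnn_out d S #|S| t p R0 ->
    ClosestPair_out d (ball S p R0 :|: annulus S p R0 ((1 + / INR t) * R0)) d1 ->
    ClosestPair_out d (annulus S p R0 ((1 + / INR t) * R0) :|: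
                       (S :\: (ball S p R0 :|: annulus S p R0 ((1 + / INR t) * R0)))) d2 ->
    ClosestPair_out d S (Rbar_min d1 d2).

End FiniteMetric.

(* Main.v *)
Require Import Defs.
From Stdlib Require Import Reals Lra.
From Coquelicot Require Import Rbar.
From mathcomp Require Import all_boot.
Set Implicit Arguments.
Unset Strict Implicit.
Local Open Scope R_scope.

Definition dfold (T : finType) (dist : T -> T -> R) (l : seq (T * T)) : Rbar :=
  foldr (fun xy acc => Rbar_min (Rbar.Finite (dist xy.1 xy.2)) acc) p_infty l.

Lemma dfold_le (T : finType) (dist : T -> T -> R) (l : seq (T * T)) xy :
  xy \in l -> Rbar_le (dfold dist l) (dist xy.1 xy.2).
Proof.
rewrite /dfold; elim: l => [//|a l IH]; rewrite in_cons => /orP [/eqP ->|H].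
  exact: (Rbar_min_l (dist a.1 a.2)).
apply: Rbar_le_trans (Rbar_min_r (dist a.1 a.2) _) (IH H).
Qed.

Lemma dfold_val (T : finType) (dist : T -> T -> R) (l : seq (T * T)) :
  dfold dist l = p_infty \/ exists2 xy, xy \in l & dfold dist l = dist xy.1 xy.2.
Proof.
rewrite /dfold; elim: l => [|a l IH]; first by left.
apply: (@Rbar_min_case _ _ (fun z => z = p_infty \/ exists2 xy, xy \in a :: l & z = dist xy.1 xy.2)).
  by right; exists a => //; rewrite mem_head.
case: IH => [H|[xy H1 H2]]; first by left.
by right; exists xy => //; rewrite in_cons H1 orbT.
Qed.

Lemma delta_le (T : finType) (dist : T -> T -> R) (X : {set T}) x y :
  x \in X -> y \in X -> x != y -> Rbar_le (delta dist X) (dist x y).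
Proof.
move=> Hx Hy Hxy; rewrite /delta.
apply: (@dfold_le _ dist _ (x, y)).
by rewrite mem_filter /= Hxy; apply: allpairs_f; rewrite mem_enum.
Qed.

Lemma delta_val (T : finType) (dist : T -> T -> R) (X : {set T}) :
  delta dist X = p_infty \/
  exists x y, [/\ x \in X, y \in X, x != y & delta dist X = dist x y].
Proof.
case: (dfold_val dist [seq xy <- [seq (x, y) | x <- enum X, y <- enum X] | xy.1 != xy.2]) => [H|[xy H1 H2]].
  by left.
right; move: H1; rewrite mem_filter => /andP [Hne /allpairsP [[a b] [/= Ha Hb Hab]]].
exists a, b; subst xy; move: Ha Hb; rewrite !mem_enum => Ha Hb; split => //.
Qed.

Lemma delta_mono (T : finType) (dist : T -> T -> R) (X Y : {set T}) :
  X \subset Y -> Rbar_le (delta dist Y) (delta dist X).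
Proof.
move=> /subsetP HXY; case: (delta_val dist X) => [->|[x [y [Hx Hy Hxy ->]]]].
  by case: (delta dist Y).
by apply: delta_le => //; apply: HXY.
Qed.

Lemma count_cover (T : finType) (P : T -> T -> bool) (s : seq T) (A : {set T}) :
  (forall a, a \in A -> exists2 q, q \in s & P q a) ->
  (forall q a b, a \in A -> b \in A -> P q a -> P q b -> a = b) ->
  (#|A| <= size s)%N.
Proof.
elim: s A => [|q s IH] A Hcov Hinj.
  case: (set_0Vmem A) => [->|[a Ha]]; first by rewrite cards0.
  by case: (Hcov a Ha).
have -> : A = [set a in A | ~~ P q a] :|: [set a in A | P q a].
  by apply/setP => a; rewrite !inE; case: (a \in A); case: (P q a).
apply: leq_trans (leq_card_setU _ _).1 _.
rewrite /= -addn1; apply: leq_add.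
  apply: IH.
  - move=> a; rewrite inE => /andP [Ha Hn]; case: (Hcov a Ha) => q'.
    rewrite in_cons => /orP [/eqP ->|Hq'] Hp; first by rewrite Hp in Hn.
    by exists q'.
  - move=> q' a b; rewrite !inE => /andP [Ha _] /andP [Hb _]; exact: Hinj.
case: (set_0Vmem [set a in A | P q a]) => [->|[a Ha]]; first by rewrite cards0.
rewrite -(cards1 a); apply: subset_leq_card; apply/subsetP => b Hb.
move: Ha Hb; rewrite !inE => /andP [Ha Hpa] /andP [Hb Hpb]; apply/eqP.
exact: (Hinj q b a Hb Ha Hpb Hpa).
Qed.

Lemma cover1 (T : finType) (dist : T -> T -> R) lam (H : doubling_cover dist lam) p r :
  0 < r -> exists s : seq T, (size s <= lam)%N /\
    forall x, dist p x <= r -> exists2 q, q \in s & dist q x <= r / 2.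
Proof.
move=> Hr; case: (H p r Hr) => Q [HQ Hsub].
exists (enum Q); split; first by rewrite -cardE.
move=> x Hx.
have : x \in ball dist setT p r by rewrite /ball !inE /Rleb; case: Rle_dec.
move/(subsetP Hsub)/bigcupP => [q Hq]; rewrite /ball !inE /Rleb; case: Rle_dec => // Hle _.
by exists q; rewrite ?mem_enum.
Qed.

Lemma combine (T : finType) (dist : T -> T -> R) (rho rho' : R) (M : nat)
  (F : forall q : T, exists s : seq T, (size s <= M)%N /\
     forall x, dist q x <= rho -> exists2 q', q' \in s & dist q' x <= rho')
  (s1 : seq T) : exists s : seq T, (size s <= size s1 * M)%N /\
     forall x, (exists2 q, q \in s1 & dist q x <= rho) -> exists2 q', q' \in s & dist q' x <= rho'.
Proof.
elim: s1 => [|q s1 [s [Hs Hc]]].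
  by exists [::]; split => // x [q].
case: (F q) => s' [Hs' Hc'].
exists (s' ++ s); split; first by rewrite size_cat mulSn leq_add.
move=> x [q0]; rewrite in_cons => /orP [/eqP -> Hd | Hq0 Hd].
  by case: (Hc' x Hd) => q' H1 H2; exists q' => //; rewrite mem_cat H1.
case: (Hc x (ex_intro2 _ _ q0 Hq0 Hd)) => q' H1 H2; exists q' => //.
by rewrite mem_cat H1 orbT.
Qed.

Lemma cover_k (T : finType) (dist : T -> T -> R) lam (H : doubling_cover dist lam) k :
  forall p r, 0 < r -> exists s : seq T, (size s <= lam ^ k)%N /\
    forall x, dist p x <= r -> exists2 q, q \in s & dist q x <= r / 2 ^ k.
Proof.
elim: k => [|k IH] p r Hr.
  exists [:: p]; split; first by rewrite expn0.
  move=> x Hx; exists p; first by rewrite mem_head.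
  by replace (r / 2 ^ 0) with r by (simpl; field).
case: (cover1 H p Hr) => s1 [Hs1 Hc1].
have Hr2 : 0 < r / 2 by lra.
case: (@combine T dist (r / 2) (r / 2 / 2 ^ k) (lam ^ k) (fun q => IH q (r / 2) Hr2) s1)
  => s [Hs Hc].
exists s; split.
  by apply: leq_trans Hs _; rewrite expnS leq_mul2r Hs1 orbT.
move=> x Hx; case: (Hc x (Hc1 x Hx)) => q H1 H2; exists q => //.
replace (r / 2 ^ k.+1) with (r / 2 / 2 ^ k) => //.
simpl; field; apply: pow_nonzero; lra.
Qed.

Lemma packing (T : finType) (dist : T -> T -> R) lam (Hm : is_metric dist)
  (H : doubling_cover dist lam) k p r del (A : {set T}) :
  0 < r -> (forall a, a \in A -> dist p a <= r) ->
  (forall a b, a \in A -> b \in A -> a <> b -> del <= dist a b) ->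
  r / 2 ^ k < del / 2 -> (#|A| <= lam ^ k)%N.
Proof.
move=> Hr HA Hsep Hk.
case: (cover_k H k p Hr) => s [Hs Hc].
apply: leq_trans Hs.
apply: (@count_cover T (fun q a => Rleb (dist q a) (r / 2 ^ k))).
  move=> a Ha; case: (Hc a (HA a Ha)) => q H1 H2; exists q => //.
  by rewrite /Rleb; case: Rle_dec.
move=> q a b Ha Hb; rewrite /Rleb; case: Rle_dec => // H1 _; case: Rle_dec => // H2 _.
case: (eqVneq a b) => // /eqP Hne; exfalso.
have Hab := Hsep a b Ha Hb Hne.
case: Hm => [_ [Hsym Htri]].
have := Htri a q b; rewrite (Hsym a q); lra.
Qed.

Lemma pow2_ge_INR N : INR N <= 2 ^ N.
Proof.
elim: N => [|N IH]; first by simpl; lra.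
rewrite S_INR /=; have := pow_R1_Rle 2 N; lra.
Qed.

Lemma INR_expn (a k : nat) : INR (a ^ k)%N = INR a ^ k.
Proof.
elim: k => [|k IH]; first by rewrite expn0.
by rewrite expnS -multE mult_INR IH.
Qed.

Lemma exk (z : R) : exists k : nat, z < 2 ^ k /\ (k = 0%N \/ 2 ^ k <= 2 * z).
Proof.
have [N HN] : exists N : nat, z < 2 ^ N.
  case: (INR_archimed 1 z) => [|N HN]; first lra.
  by exists N; have := pow2_ge_INR N; lra.
elim: N HN => [|N IH] HN; first by exists 0%N; split => //; left.
case: (Rlt_or_le z (2 ^ N)) => H; first exact: IH.
by exists N.+1; split => //; right; simpl; lra.
Qed.

Lemma dist_pos (T : finType) (dist : T -> T -> R) (Hm : is_metric dist) x y :
  x <> y -> 0 < dist x y.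
Proof.
move=> Hxy; case: Hm => [Hz [Hsym Htri]].
have H1 := Htri x y x; rewrite (Hsym y x) in H1.
have H0 : dist x x = 0 by apply/Hz.
have Hne : dist x y <> 0 by move/Hz.
lra.
Qed.

Lemma key (T : finType) (dist : T -> T -> R) (d : R) lam
  (Hm : is_metric dist) (Hlam : doubling_cover dist lam)
  (Hdd : d = ln (INR lam) / ln 2) (S : {set T}) (t : nat) (p x y : T) (R' : R) :
  x <> y -> (forall a b, a <> b -> dist x y <= dist a b) ->
  is_min_radius dist S p (INR #|S| / (2 * Rpower (4 * exp 1) d)) R' ->
  ~ (INR #|S| < 2 * Rpower (16 * exp 1) d) ->
  INR t <= / (16 * exp 1) * Rpower (INR #|S| / 2) (/ d) < INR t + 1 ->
  1 <= INR t /\ INR t * dist x y <= R'.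
Proof.
move=> Hxy Hsep [HR' [Hball _]] Hbig [Ht Htu].
set del := dist x y.
have Hdel : 0 < del by exact: dist_pos.
have H2 : (#|[set x; y]| <= lam ^ 2)%N.
  apply: (@packing T dist lam Hm Hlam 2 x del del) => //.
  - move=> a; rewrite !inE => /orP [/eqP ->|/eqP ->].
      by case: Hm => [Hz _]; rewrite (proj2 (Hz x x) erefl); lra.
    by rewrite /del; lra.
  - by move=> a b _ _; apply: Hsep.
  - by simpl; lra.
have Hl2 : (2 <= lam)%N.
  move: H2; rewrite cards2; have -> : (x != y) = true by apply/eqP.
  by case: (lam) => [|[|l]].
have Hlam2 : 2 <= INR lam by have := le_INR 2 lam (elimT leP Hl2 : (2 <= lam)%coq_nat); simpl; lra.
have Hln2 : 0 < ln 2 by have := ln_lt_2; lra.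
have Hlnl : ln 2 <= ln (INR lam).
  case: (Rle_lt_or_eq_dec _ _ Hlam2) => H; last by rewrite H; right.
  by apply: Rlt_le; apply: ln_increasing => //; lra.
have Hd1 : 1 <= d.
  rewrite Hdd; apply/(Rmult_le_reg_r (ln 2)) => //.
  by rewrite /Rdiv Rmult_assoc Rinv_l; lra.
have Hdln : d * ln 2 = ln (INR lam) by rewrite Hdd; field; lra.
have He : 0 < exp 1 := exp_pos 1.
have Hn : 0 < INR #|S|.
  have := exp_pos (d * ln (16 * exp 1)); rewrite /Rpower in Hbig; lra.
have Ht1 : 1 <= INR t.
  have H16e : 16 * exp 1 <= Rpower (INR #|S| / 2) (/ d).
    have -> : 16 * exp 1 = Rpower (Rpower (16 * exp 1) d) (/ d).
      by rewrite Rpower_mult Rinv_r ?Rpower_1 //; lra.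
    apply: Rle_Rpower_l; first by left; apply: Rinv_0_lt_compat; lra.
    split; first by apply: exp_pos.
    lra.
  have : 1 <= / (16 * exp 1) * Rpower (INR #|S| / 2) (/ d).
    apply/(Rmult_le_reg_l (16 * exp 1)); first lra.
    by rewrite -Rmult_assoc Rinv_r ?Rmult_1_l; lra.
  case: (t) Htu => [|t'] Htu; first by simpl in Htu; lra.
  by rewrite S_INR; have := pos_INR t'; lra.
split => //.
apply: Rnot_lt_le => Hlt.
case: (exk (2 * R' / del)) => k [Hk1 Hk2].
have Hcard : (#|ball dist S p R'| <= lam ^ k)%N.
  apply: (@packing T dist lam Hm Hlam k p R' del) => //.
  - by move=> a; rewrite /ball !inE /Rleb; case: (Rle_dec (dist p a) R') => // _ /andP [].
  - by move=> a b _ _; apply: Hsep.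
  - have Hpk : 0 < 2 ^ k by apply: pow_lt; lra.
    apply/(Rmult_lt_reg_r (2 ^ k)) => //.
    rewrite /Rdiv Rmult_assoc Rinv_l; last lra.
    apply/(Rmult_lt_reg_r (2 / del)); first by apply: Rdiv_lt_0_compat; lra.
    move: Hk1; rewrite /Rdiv.
    have -> : R' * 1 * (2 * / del) = 2 * R' * / del by ring.
    have -> : del * / 2 * 2 ^ k * (2 * / del) = 2 ^ k by field; lra.
    done.
have HcR : INR #|ball dist S p R'| <= Rpower (2 ^ k) d.
  apply: Rle_trans (le_INR _ _ (elimT leP Hcard : (_ <= _)%coq_nat)) _.
  rewrite INR_expn -Rpower_pow; last lra.
  rewrite /Rpower ln_pow; last lra.
  by right; congr exp; rewrite -Hdln; ring.
have H16 : Rpower (16 * exp 1 * INR t) d <= INR #|S| / 2.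
  have -> : INR #|S| / 2 = Rpower (Rpower (INR #|S| / 2) (/ d)) d.
    by rewrite Rpower_mult Rinv_l ?Rpower_1 //; lra.
  apply: Rle_Rpower_l; first lra.
  split; first by apply: Rmult_lt_0_compat; lra.
  apply/(Rmult_le_reg_l (/ (16 * exp 1))); first by apply: Rinv_0_lt_compat; lra.
  by rewrite -Rmult_assoc Rinv_l ?Rmult_1_l //; lra.
have Hsplit : Rpower (16 * exp 1 * INR t) d = Rpower (4 * exp 1) d * Rpower (4 * INR t) d.
  rewrite Rpower_mult_distr; try lra.
  by congr Rpower; ring.
have Hp4e : 0 < Rpower (4 * exp 1) d by apply: exp_pos.
have H4t : Rpower (4 * INR t) d <= Rpower (2 ^ k) d.
  apply: Rle_trans HcR; apply: Rle_trans Hball.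
  apply/(Rmult_le_reg_l (2 * Rpower (4 * exp 1) d)); first lra.
  have -> : 2 * Rpower (4 * exp 1) d * (INR #|S| / (2 * Rpower (4 * exp 1) d)) = INR #|S|
    by field; lra.
  lra.
have H4t' : 4 * INR t <= 2 ^ k.
  apply: Rnot_lt_le => H; have : Rpower (2 ^ k) d < Rpower (4 * INR t) d.
    by apply: Rlt_Rpower_l; [lra | split => //; apply: pow_lt; lra].
  lra.
case: Hk2 => [Hk0|Hk2].
  by rewrite Hk0 /= in H4t'; lra.
have : 2 * (2 * R' / del) < 4 * INR t.
  rewrite /Rdiv; apply/(Rmult_lt_reg_r del) => //.
  have -> : 2 * (2 * R' * / del) * del = 4 * R' by field; lra.
  lra.
lra.
Qed.

Lemma main_ind (T : finType) (dist : T -> T -> R) (d : R) lam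
  (Hm : is_metric dist) (Hlam : doubling_cover dist lam)
  (Hdd : d = ln (INR lam) / ln 2) (S : {set T}) (delta0 : Rbar)
  (Hout : ClosestPair_out dist d S delta0) :
  Rbar_le (delta dist S) delta0 /\
  (delta dist S = delta dist [set: T] -> delta0 = delta dist [set: T]).
Proof.
elim: Hout => {S delta0}.
  by move=> S _; split => //; apply: Rbar_le_refl.
move=> S t p R0 d1 d2 Hbig Ht Hsp _ [IH1a IH1b] _ [IH2a IH2b].
set S1 := ball dist S p R0.
set S2 := annulus dist S p R0 ((1 + / INR t) * R0).
have sub1 : (S1 :|: S2) \subset S.
  by apply/subsetP => z; rewrite /S1 /S2 /ball /annulus !inE => /orP [/andP [] | /andP []].
have sub2 : (S2 :|: (S :\: (S1 :|: S2))) \subset S.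
  apply/subsetP => z; rewrite /S2 /annulus !inE => /orP [/andP [] // | /andP [] //].
have L1 := Rbar_le_trans _ _ _ (delta_mono dist sub1) IH1a.
have L2 := Rbar_le_trans _ _ _ (delta_mono dist sub2) IH2a.
split; first by apply: (@Rbar_min_case _ _ (fun z => Rbar_le (delta dist S) z)).
move=> Heq.
case: (delta_val dist S) => [Hinf | [x [y [Hx Hy Hxy Hval]]]].
  rewrite -Heq Hinf; rewrite Hinf in L1 L2.
  apply: (@Rbar_min_case _ _ (fun z => z = p_infty)).
    by move: L1; case: (d1).
  by move: L2; case: (d2).
have Hsep : forall a b, a <> b -> dist x y <= dist a b.
  move=> a b Hab; have := delta_le dist (in_setT a) (in_setT b) (introN eqP Hab).
  by rewrite -Heq Hval.
case: Hsp => R' [[Hp [Hmin _]] [i [Hi [_ HR0]]]].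
have [Ht1 Hkey] := key Hm Hlam Hdd (elimN eqP Hxy) Hsep Hmin Hbig Ht.
have HR' : 0 < R' by case: Hmin.
have Hu : 0 < / INR t by apply: Rinv_0_lt_compat; lra.
have HR0' : R' <= R0.
  rewrite HR0; have := pow_R1_Rle (1 + / INR t) i.-1; nra.
have Hdel : 0 < dist x y by apply: dist_pos => //; apply/eqP.
case: (Hm) => [_ [Hsym Htri]].
have Hbad : forall u v, dist u v = dist x y -> u \in S1 -> v \in S -> v \notin S1 :|: S2 -> False.
  move=> u v Huv Hu1 Hv Hv1.
  have Hpu : dist p u <= R0.
    move: Hu1; rewrite /S1 /ball !inE /Rleb.
    by case: (Rle_dec (dist p u) R0) => [H _ // | _ /andP []].
  have Hpv : (1 + / INR t) * R0 < dist p v.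
    move: Hv1; rewrite /S1 /S2 /ball /annulus !inE Hv /= /Rleb /Rltb.
    case: (Rle_dec (dist p v) R0) => [//|H1] /=.
    destruct (Rlt_dec R0 (dist p v)) as [H3|H3]; last lra.
    destruct (Rle_dec (dist p v) ((1 + / INR t) * R0)) as [H2|H2]; first done.
    move=> _; lra.
  have := Htri p u v; rewrite Huv => Htr.
  have Hinv : INR t * / INR t = 1 by field; lra.
  have Hd' : R0 * / INR t < dist x y.
    have : (1 + / INR t) * R0 = R0 + R0 * / INR t by ring.
    lra.
  have : INR t * (R0 * / INR t) < INR t * dist x y by apply: Rmult_lt_compat_l; lra.
  rewrite -Rmult_assoc (Rmult_comm (INR t) R0) Rmult_assoc Hinv; lra.
have Hwin : forall (A : {set T}) (dA : Rbar), x \in A -> y \in A -> A \subset S ->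
    (delta dist A = delta dist [set: T] -> dA = delta dist [set: T]) ->
    dA = delta dist [set: T].
  move=> A dA HxA HyA HAS IH; apply: IH; apply: Rbar_le_antisym.
    by rewrite -Heq Hval; apply: delta_le.
  by apply: delta_mono; apply: subsetT.
have Hcase : (x \in S1 :|: S2) && (y \in S1 :|: S2) \/
             (x \in S2 :|: (S :\: (S1 :|: S2))) && (y \in S2 :|: (S :\: (S1 :|: S2))).
  have Hin : forall z, z \in S -> z \notin S2 :|: (S :\: (S1 :|: S2)) -> z \in S1.
    move=> z Hz; rewrite in_setU in_setD Hz in_setU.
    by case: (z \in S1); case: (z \in S2).
  case Ex: (x \in S1 :|: S2); case Ey: (y \in S1 :|: S2); first by left.
  - right; apply/andP; split; last by rewrite in_setU in_setD Hy Ey orbT.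
    case Ex2: (x \in S2 :|: (S :\: (S1 :|: S2))) => //.
    exfalso; apply: (Hbad x y) => //; last by rewrite Ey.
    by apply: Hin => //; rewrite Ex2.
  - right; apply/andP; split; first by rewrite in_setU in_setD Hx Ex orbT.
    case Ey2: (y \in S2 :|: (S :\: (S1 :|: S2))) => //.
    exfalso; apply: (Hbad y x) => //; last by rewrite Ex.
    by apply: Hin => //; rewrite Ey2.
  - right; apply/andP; split.
      by rewrite in_setU in_setD Hx Ex orbT.
    by rewrite in_setU in_setD Hy Ey orbT.
case: Hcase => /andP [HxA HyA].
  have E1 := Hwin _ _ HxA HyA sub1 IH1b.
  rewrite -E1 in L2 *; rewrite Heq in L2.
  apply: (@Rbar_min_case_strong _ _ (fun z => z = d1)) => // H.
  by apply: Rbar_le_antisym => //; rewrite E1.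
have E2 := Hwin _ _ HxA HyA sub2 IH2b.
rewrite -E2 in L1 *; rewrite Heq in L1.
apply: (@Rbar_min_case_strong _ _ (fun z => z = d2)) => // H.
by apply: Rbar_le_antisym => //; rewrite E2.
Qed.

Theorem lemma5 (T : finType) (dist : T -> T -> R) (d : R)
  (Hmetric : is_metric dist) (Hd : doubling_dimension dist d)
  (S : {set T}) (HS : (2 <= #|S|)%N) (delta0 : Rbar)
  (Hout : ClosestPair_out dist d S delta0) :
  Rbar_le (delta dist [set: T]) delta0 /\
  (delta dist S = delta dist [set: T] -> delta0 = delta dist [set: T]).
Proof.
case: Hd => lam [[Hcov _] Hdd].
have [H1 H2] := main_ind Hmetric Hcov Hdd Hout.
split => //.
apply: Rbar_le_trans H1.
by apply: delta_mono; apply: subsetT.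
Qed.
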